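(* Let $(M,\cdot,1)$ be a monoid, $\Sigma$ a finite alphabet, $A=(Q,\Sigma,u,i_u,\delta,w,\rho)$ an $M$-DFA and $(g^\pi_A,f^\pi_A)$ the factorization on $L$ induced by $A$ for a selection function $\pi$. Let $N=N^{(g^\pi_A,f^\pi_A)}(f^\pi_A(\mathcal{A}),g^\pi_A(\mathcal{A}))$. Then: 1. $N$ is an $M$-DFA equivalent to $A$; 2. $N$ is transition-equalized; 3. if $A$ is minimal then $N$ is minimal; 4. there exists a minimal and transition-equalized $M$-DFA equivalent to $A$; 5. if $A$ is minimal then $f^\pi_A\circ f^\pi_A=f^\pi_A$; 6. if $A$ is minimal and transition-equalized then $f^{\pi_i}_A=f^{\pi_j}_A$ for any two selection functions $\pi_i,\pi_j$.
   Context: $L$ is the set of all functions $\Sigma^*\to M$; $\varepsilon$ the empty word; $(m\cdot\ell)(\gamma)=m\cdot\ell(\gamma)$; $\Delta_\alpha(\ell)(\gamma)=\ell(\alpha\gamma)$. An $M$-DFA is $A=(Q,\Sigma,u,i_u,\delta,w,\rho)$ with $Q$ finite nonempty, initial state $u$, initial value $i_u\in M$, $\delta:Q\times\Sigma\to Q$, $w:Q\times\Sigma\to M$, $\rho:Q\to M$. Write $q\alpha$ for the extended transition, $w^*(q,\varepsilon)=1$, $w^*(q,\alpha\sigma)=w^*(q,\alpha)\cdot w(q\alpha,\sigma)$; $\mathcal{A}(\alpha)=i_u\cdot w^*(u,\alpha)\cdot\rho(u\alpha)$ is the recognized language and $\mathcal{A}_q(\alpha)=w^*(q,\alpha)\cdot\rho(q\alpha)$.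 Equivalent: same recognized language. Minimal: no equivalent $M$-DFA has fewer states. Transition-equalized: for all $p,q\in Q$, $\sigma,\tau\in\Sigma$, $\Delta_\sigma(\mathcal{A}_q)=\Delta_\tau(\mathcal{A}_p)$ implies $\delta(q,\sigma)=\delta(p,\tau)$ and $w(q,\sigma)=w(p,\tau)$. Induced factorization: $P_A=\{((\sigma,q),\Delta_\sigma(\mathcal{A}_q))\mid\sigma\in\Sigma,q\in Q\}\cup\{((\varepsilon,u),\mathcal{A})\}$, with $\approx_A$ identifying elements with equal language component; a selection function $\pi$ chooses a representative in each class, always choosing $((\varepsilon,u),\mathcal{A})$ for its class. $f^\pi_A(\mathcal{A})=\mathcal{A}_u$, $g^\pi_A(\mathcal{A})=i_u$; if $\ell\neq\mathcal{A}$ is the language component of a class with chosen representative $((\sigma,q),\Delta_\sigma(\mathcal{A}_q))$, then $f^\pi_A(\ell)=\mathcal{A}_{q\sigma}$, $g^\pi_A(\ell)=w(q,\sigma)$; otherwise $f^\pi_A(\ell)=\ell$, $g^\pi_A(\ell)=1$. For $g:L\to M$, $f:L\to L$ with $g(\ell)\cdot f(\ell)=\ell$ for all $\ell$, let $S^{(g,f)}_\varepsilon=\mathrm{id}_L$, $S^{(g,f)}_{\alpha\sigma}=f\circ\Delta_\sigma\circ S^{(g,f)}_\alpha$. For $\ell\in L$, $m\in M$, $N^{(g,f)}(\ell,m)$ is the automaton with state set $\{S^{(g,f)}_\alpha(\ell)\mid\alpha\in\Sigma^*\}$, initial state $\ell$, initial value $m$, $\delta(S^{(g,f)}_\alpha(\ell),\sigma)=S^{(g,f)}_{\alpha\sigma}(\ell)$,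 $w(S^{(g,f)}_\alpha(\ell),\sigma)=g(\Delta_\sigma(S^{(g,f)}_\alpha(\ell)))$, $\rho(S^{(g,f)}_\alpha(\ell))=(S^{(g,f)}_\alpha(\ell))(\varepsilon)$. *)

(* Defs.v *)
From Stdlib Require Import ClassicalEpsilon.
From Stdlib Require Lists.List.
From mathcomp Require Import all_boot.

Set Implicit Arguments.
Unset Strict Implicit.
Unset Printing Implicit Defensive.

Record monoid := Monoid {
  mcar :> Type;
  mmul : mcar -> mcar -> mcar;
  mone : mcar;
  mmulA : forall x y z, mmul x (mmul y z) = mmul (mmul x y) z;
  mmul1 : forall x, mmul mone x = x;
  mmulm1 : forall x, mmul x mone = x
}.

Section Defs.
Variables (M : monoid) (Sigma : finType).

Definition lang := seq Sigma -> M.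

Definition lscale (m : M) (l : lang) : lang := fun g => mmul m (l g).

Definition Delta (alpha : seq Sigma) (l : lang) : lang := fun g => l (alpha ++ g).

(* An automaton (Q, Sigma, u, i_u, delta, w, rho); the state set is an
   arbitrary type, finiteness is the predicate [is_mdfa] below. *)
Record dfa := Dfa {
  st : Type;
  init : st;
  ival : M;
  delta : st -> Sigma -> st;
  wt : st -> Sigma -> M;
  rho : st -> M
}.

Definition is_finite (T : Type) := exists s : list T, forall x, List.In x s.
Definition has_card (T : Type) (n : nat) :=
  exists s : list T, List.NoDup s /\ (forall x, List.In x s) /\ List.length s = n.

(* M-DFA: finite nonempty state set (nonempty is automatic: init). *)
Definition is_mdfa (A : dfa) := is_finite (st A).

Definition dstar (A : dfa) (q : st A) (alpha : seq Sigma) : st A :=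
  foldl (@delta A) q alpha.

Definition wstar (A : dfa) (q : st A) (alpha : seq Sigma) : M :=
  (foldl (fun (acc : st A * M) s => (delta acc.1 s, mmul acc.2 (wt acc.1 s)))
         (q, mone M) alpha).2.

Definition lang_q (A : dfa) (q : st A) : lang :=
  fun alpha => mmul (wstar q alpha) (rho (dstar q alpha)).

Definition rlang (A : dfa) : lang := lscale (ival A) (lang_q (init A)).

Definition dfa_equiv (A B : dfa) := rlang A = rlang B.

Definition fewer_states (B A : dfa) :=
  exists nB nA, has_card (st B) nB /\ has_card (st A) nA /\ nB < nA.

Definition minimal (A : dfa) :=
  forall B, is_mdfa B -> dfa_equiv B A -> ~ fewer_states B A.

Definition transition_equalized (A : dfa) :=
  forall (p q : st A) (s t : Sigma),
    Delta [:: s] (lang_q q) = Delta [:: t] (lang_q p) ->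
    delta q s = delta p t /\ wt q s = wt p t.

(* Induced factorization.  Elements of P_A are indexed by
   option (Sigma * Q): [Some (s,q)] is ((s,q), Delta_s(A_q)),
   [None] is ((eps,u), A). *)
Definition PA_lang (A : dfa) (x : option (Sigma * st A)) : lang :=
  match x with
  | None => rlang A
  | Some (s, q) => Delta [:: s] (lang_q q)
  end.
Arguments PA_lang : clear implicits.

(* A selection function chooses, for each class (identified by its common
   language component l), a representative pi l of that class, and chooses
   ((eps,u), A) for the class of A. *)
Definition is_selection (A : dfa) (pi : lang -> option (Sigma * st A)) :=
  (forall x, PA_lang A (pi (PA_lang A x)) = PA_lang A x) /\ pi (rlang A) = None.

Definition in_PA (A : dfa) (l : lang) := exists x, PA_lang A x = l.

Definition fA (A : dfa) (pi : lang -> option (Sigma * st A)) (l : lang) : lang :=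
  if excluded_middle_informative (l = rlang A) then lang_q (init A)
  else if excluded_middle_informative (in_PA A l) then
    match pi l with
    | Some (s, q) => lang_q (delta q s)
    | None => l
    end
  else l.

Definition gA (A : dfa) (pi : lang -> option (Sigma * st A)) (l : lang) : M :=
  if excluded_middle_informative (l = rlang A) then ival A
  else if excluded_middle_informative (in_PA A l) then
    match pi l with
    | Some (s, q) => wt q s
    | None => mone M
    end
  else mone M.

Definition Sop (f : lang -> lang) (alpha : seq Sigma) (l : lang) : lang :=
  foldl (fun l' s => f (Delta [:: s] l')) l alpha.

Lemma Sop_rcons f alpha s l :
  Sop f (rcons alpha s) l = f (Delta [:: s] (Sop f alpha l)).
Proof. by rewrite /Sop foldl_rcons. Qed.

Definition Nstate (f : lang -> lang) (l : lang) :=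
  { l' : lang | exists alpha, l' = Sop f alpha l }.

Definition Ninit (f : lang -> lang) (l : lang) : Nstate f l :=
  exist _ l (ex_intro _ [::] erefl).

Lemma Ndelta_proof (f : lang -> lang) (l : lang) (x : Nstate f l) (s : Sigma) :
  exists alpha, f (Delta [:: s] (proj1_sig x)) = Sop f alpha l.
Proof.
case: x => l' [alpha H] /=; exists (rcons alpha s); by rewrite Sop_rcons H.
Qed.

Definition Ndelta (f : lang -> lang) (l : lang) (x : Nstate f l) (s : Sigma) :
  Nstate f l := exist _ (f (Delta [:: s] (proj1_sig x))) (Ndelta_proof x s).

Definition Nauto (g : lang -> M) (f : lang -> lang) (l : lang) (m : M) : dfa :=
  {| st := Nstate f l;
     init := Ninit f l;
     ival := m;
     delta := @Ndelta f l;
     wt := fun x s => g (Delta [:: s] (proj1_sig x));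
     rho := fun x => proj1_sig x [::] |}.

End Defs.

(* Main.v *)
Require Import Defs.
From mathcomp Require Import all_boot.
From Stdlib Require Import ClassicalEpsilon Classical ProofIrrelevance FunctionalExtensionality.
From Stdlib Require Lists.List FinFun.
From Stdlib Require Import Lia.
From mathcomp Require Import zify.

Set Implicit Arguments. Unset Strict Implicit. Unset Printing Implicit Defensive.

Section Gen.
Variables (M : monoid) (Sigma : finType).
Implicit Types (A : dfa M Sigma).

Lemma foldl_wstar A (q : st A) (m : M) (g : seq Sigma) :
  foldl (fun (acc : st A * M) s => (delta acc.1 s, mmul acc.2 (wt acc.1 s))) (q, m) g
  = (dstar q g, mmul m (wstar q g)).
Proof.
elim: g q m => [|s g IH] q m /=; first by rewrite /wstar /= mmulm1.
rewrite IH [wstar q (s :: g)]/wstar /= IH /= mmul1 mmulA //.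
Qed.

Lemma lang_q_cons A (x : st A) s g :
  lang_q x (s :: g) = mmul (wt x s) (lang_q (delta x s) g).
Proof.
rewrite /lang_q /wstar /= foldl_wstar /= mmul1 -mmulA //.
Qed.

Lemma lang_q_nil A (x : st A) : lang_q x [::] = rho x.
Proof. by rewrite /lang_q /wstar /= mmul1. Qed.

Lemma Delta_lang_q A (x : st A) s :
  Delta [:: s] (lang_q x) = lscale (wt x s) (lang_q (delta x s)).
Proof. apply: functional_extensionality => g; by rewrite /Delta /lscale /= lang_q_cons. Qed.


Lemma dedup (T : Type) (s : list T) :
  exists s', List.NoDup s' /\ forall x, List.In x s' <-> List.In x s.
Proof.
elim: s => [|a s [s' [Hn Hi]]]; first by exists nil; split; [constructor|].
case: (classic (List.In a s')) => H.
- exists s'; split => // x; split => [/Hi|] /=; first by right.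
  case=> [<-|/Hi] //.
- exists (a :: s'); split; first by constructor.
  move=> x /=; split; case=> [->|/Hi]; auto.
Qed.

Lemma fin_card (T : Type) : is_finite T -> exists n, has_card T n.
Proof.
case=> s Hs; have [s' [Hn Hi]] := dedup s.
exists (List.length s'), s'; split => //; split => // x; apply/Hi; auto.
Qed.

Lemma card_le (S T : Type) (h : S -> T) n m :
  has_card S n -> has_card T m -> (forall x y, h x = h y -> x = y) -> n <= m.
Proof.
case=> sS [nS [_ <-]] [sT [_ [cT <-]]] inj.
rewrite -(List.length_map h); apply/leP; apply: List.NoDup_incl_length.
- by apply: FinFun.Injective_map_NoDup.
- by move=> y _.
Qed.

Lemma card_lt (S T : Type) (h : S -> T) n m (t : T) :
  has_card S n -> has_card T m -> (forall x y, h x = h y -> x = y) ->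
  (forall x, h x <> t) -> n < m.
Proof.
case=> sS [nS [_ <-]] [sT [_ [cT <-]]] inj nt.
have -> : (List.length sS).+1 = List.length (t :: List.map h sS) by rewrite /= List.length_map.
apply/leP; apply: List.NoDup_incl_length.
- constructor; last by apply: FinFun.Injective_map_NoDup.
  by case/List.in_map_iff => x [/nt].
- by move=> y _.
Qed.

Lemma fin_image (T S : Type) (h : T -> S) :
  is_finite T -> (forall y, exists x, h x = y) -> is_finite S.
Proof.
case=> s Hs surj; exists (List.map h s) => y.
case: (surj y) => x <-; by apply: List.in_map.
Qed.

Lemma sig_ext (T : Type) (P : T -> Prop) (x y : {a | P a}) :
  proj1_sig x = proj1_sig y -> x = y.
Proof. case: x y => [a Ha] [b Hb] /= E; subst b; f_equal; apply: proof_irrelevance. Qed.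

Lemma card_uniq (T : Type) n m : has_card T n -> has_card T m -> n = m.
Proof.
move=> c1 c2; have h1 := card_le c1 c2 (h := id) (fun x y e => e).
have h2 := card_le c2 c1 (h := id) (fun x y e => e); lia.
Qed.

Section NGen.
Variables (g : lang M Sigma -> M) (f : lang M Sigma -> lang M Sigma).
Hypothesis gf : forall l x, mmul (g l) (f l x) = l x.
Variables (l : lang M Sigma) (m : M).

Lemma N_lang (x : st (Nauto g f l m)) ga : lang_q x ga = proj1_sig x ga.
Proof.
elim: ga x => [|s ga IH] x; first by rewrite lang_q_nil.
rewrite lang_q_cons IH /=; exact: gf.
Qed.

Lemma N_lang_fun (x : st (Nauto g f l m)) : lang_q x = proj1_sig x.
Proof. apply: functional_extensionality => ga; exact: N_lang. Qed.

Lemma N_rlang : rlang (Nauto g f l m) = lscale m l.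
Proof. by rewrite /rlang N_lang_fun. Qed.

Lemma N_te : transition_equalized (Nauto g f l m).
Proof.
move=> p q s t; rewrite !N_lang_fun => H; split; last by rewrite /= H.
apply: sig_ext; by rewrite /= H.
Qed.
End NGen.

Lemma dfa_equiv_trans (A B C : dfa M Sigma) : dfa_equiv A B -> dfa_equiv B C -> dfa_equiv A C.
Proof. rewrite /dfa_equiv; congruence. Qed.

Section Fact.
Variables (A : dfa M Sigma) (pi : lang M Sigma -> option (Sigma * st A)).
Hypothesis sel : is_selection pi.

Lemma gf_id l x : mmul (gA pi l) (fA pi l x) = l x.
Proof.
rewrite /gA /fA; case: excluded_middle_informative => [e|ne] /=; first by rewrite e.
case: excluded_middle_informative => [inP|_] /=; last by rewrite mmul1.
case: inP => y Hy.
move: (sel.1 y); rewrite Hy; case: (pi l) => [[s q]|] /= H.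
- by rewrite -H /Delta /= lang_q_cons.
- by case: ne.
Qed.

Lemma pi_some l : l <> rlang A -> in_PA A l ->
  exists s q, pi l = Some (s, q) /\ Delta [:: s] (lang_q q) = l.
Proof.
move=> ne [y Hy]; move: (sel.1 y); rewrite Hy; case: (pi l) => [[s q]|] /= H.
- by exists s, q.
- by case: ne.
Qed.

Lemma fA_rlang : fA pi (rlang A) = lang_q (init A).
Proof. by rewrite /fA; case: excluded_middle_informative. Qed.

Lemma gA_rlang : gA pi (rlang A) = ival A.
Proof. by rewrite /gA; case: excluded_middle_informative. Qed.

Lemma fA_inPA l : in_PA A l -> exists q : st A, fA pi l = lang_q q.
Proof.
move=> inP; rewrite /fA; case: excluded_middle_informative => [_|ne] /=.
  by exists (init A).
case: excluded_middle_informative => // _ /=.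
have [s [q [-> _]]] := pi_some ne inP; by exists (delta q s).
Qed.

Lemma fA_cases l : fA pi l = l \/ exists q : st A, fA pi l = lang_q q.
Proof.
case: (classic (in_PA A l)) => H; first by right; apply: fA_inPA.
left; rewrite /fA; case: excluded_middle_informative => [e|_] /=.
  by case: H; exists None.
by case: excluded_middle_informative.
Qed.

Lemma reach al : exists q : st A, Sop (fA pi) al (fA pi (rlang A)) = lang_q q.
Proof.
elim/last_ind: al => [|al s [q IH]]; first by exists (init A); rewrite fA_rlang.
rewrite Sop_rcons IH; apply: fA_inPA; by exists (Some (s, q)).
Qed.

Definition NN := Nauto (gA pi) (fA pi) (fA pi (rlang A)) (gA pi (rlang A)).

Lemma NN_mdfa : is_mdfa A -> is_mdfa NN.
Proof.
move=> finA.
pose h (x : st A) : st NN :=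
  match excluded_middle_informative
          (exists al, lang_q x = Sop (fA pi) al (fA pi (rlang A))) with
  | left H => exist _ (lang_q x) H
  | right _ => Ninit _ _
  end.
apply: (fin_image (h := h)) => // -[l' [al E]].
have [q Hq] := reach al; exists q; rewrite /h.
case: excluded_middle_informative => [H|H].
- by apply: sig_ext; rewrite /= E Hq.
- by case: H; exists al; rewrite Hq.
Qed.

Lemma NN_equiv : dfa_equiv NN A.
Proof.
rewrite /dfa_equiv /NN N_rlang; last exact: gf_id.
apply: functional_extensionality => x; exact: gf_id.
Qed.

Lemma NN_te : transition_equalized NN.
Proof. apply: N_te; exact: gf_id. Qed.

Lemma NN_min : is_mdfa A -> minimal A -> minimal NN.
Proof.
move=> finA minA B finB eqB [nB [nN [cB [cN lt]]]].
have [nA cA] := fin_card finA.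
have reachN (x : st NN) : exists q : st A, lang_q q = proj1_sig x.
  case: x => l' [al E] /=; have [q Hq] := reach al; by exists q; rewrite E Hq.
pose c (x : st NN) := proj1_sig (constructive_indefinite_description _ (reachN x)).
have cP x : lang_q (c x) = proj1_sig x.
  by rewrite /c; case: constructive_indefinite_description.
have le : nN <= nA.
  apply: (card_le (h := c)) cN cA _ => x y e; apply: sig_ext; by rewrite -!cP e.
apply: (minA B finB (dfa_equiv_trans eqB NN_equiv)).
exists nB, nA; split => //; split => //; lia.
Qed.

End Fact.

Section Remove.
Variables (A : dfa M Sigma) (q r : st A) (w : M).
Hypothesis Hr : r <> q.
Hypothesis hw : lang_q q = lscale w (lang_q r).

Definition RT := {y : st A | y <> q}.

Definition rd (x : st A) : RT * M :=
  match excluded_middle_informative (x = q) with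
  | left _ => (exist _ r Hr, w)
  | right H => (exist _ x H, mone M)
  end.

Definition remdfa : dfa M Sigma :=
  @Dfa M Sigma RT (rd (init A)).1 (mmul (ival A) (rd (init A)).2)
    (fun x s => (rd (delta (proj1_sig x) s)).1)
    (fun x s => mmul (wt (proj1_sig x) s) (rd (delta (proj1_sig x) s)).2)
    (fun x => rho (proj1_sig x)).

Lemma rd_lang (x : st A) g : lang_q x g = mmul (rd x).2 (lang_q (proj1_sig (rd x).1) g).
Proof.
rewrite /rd; case: excluded_middle_informative => [e|ne] /=.
- by rewrite e hw.
- by rewrite mmul1.
Qed.

Lemma rem_lang (x : st remdfa) g : lang_q x g = lang_q (proj1_sig x) g.
Proof.
elim: g x => [|s g IH] x; first by rewrite !lang_q_nil.
rewrite !lang_q_cons IH /= -mmulA -rd_lang //.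
Qed.

Lemma rem_equiv : dfa_equiv remdfa A.
Proof.
rewrite /dfa_equiv /rlang; apply: functional_extensionality => g.
rewrite /lscale rem_lang /= -mmulA -rd_lang //.
Qed.

Lemma rem_fin : is_mdfa A -> is_mdfa remdfa.
Proof.
move=> finA; apply: (fin_image (h := fun x => (rd x).1)) => // -[y Hy].
exists y; rewrite /rd; case: excluded_middle_informative => [e|ne] /=.
- by case: Hy.
- exact: sig_ext.
Qed.

Lemma rem_fewer : is_mdfa A -> fewer_states remdfa A.
Proof.
move=> finA; have [nA cA] := fin_card finA.
have [nB cB] := fin_card (rem_fin finA).
exists nB, nA; split => //; split => //.
apply: (card_lt (h := fun x : RT => proj1_sig x) (t := q)) cB cA _ _.
- move=> x y; exact: sig_ext.
- by move=> [y Hy].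
Qed.
End Remove.

Lemma min_scale_inj (A : dfa M Sigma) : is_mdfa A -> minimal A ->
  forall (q r : st A) w, lang_q q = lscale w (lang_q r) -> q = r.
Proof.
move=> finA minA q r w hw; apply: NNPP => ne.
have Hr : r <> q by move=> e; apply: ne.
exact: (minA _ (rem_fin w Hr finA) (rem_equiv Hr hw) (rem_fewer w Hr finA)).
Qed.

Lemma fA_idem (A : dfa M Sigma) (pi : lang M Sigma -> option (Sigma * st A)) : is_selection pi -> is_mdfa A -> minimal A ->
  fA pi \o fA pi = fA pi.
Proof.
move=> sel finA minA.
have key (q : st A) : fA pi (lang_q q) = lang_q q.
  rewrite /fA; case: excluded_middle_informative => [e|ne] /=.
    by rewrite (min_scale_inj finA minA e).
  case: excluded_middle_informative => // inP /=.
  have [s [p [E D]]] := pi_some sel ne inP; rewrite E.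
  rewrite Delta_lang_q in D; by rewrite (min_scale_inj finA minA (esym D)).
apply: functional_extensionality => l /=.
case: (fA_cases sel l) => [E|[q E]]; by rewrite !E ?key.
Qed.

Lemma fA_uniq (A : dfa M Sigma) : transition_equalized A ->
  forall pi1 pi2 : lang M Sigma -> option (Sigma * st A), is_selection pi1 -> is_selection pi2 -> fA pi1 = fA pi2.
Proof.
move=> te pi1 pi2 s1 s2; apply: functional_extensionality => l.
rewrite /fA; case: excluded_middle_informative => // ne /=.
case: excluded_middle_informative => // inP /=.
have [a1 [q1 [E1 D1]]] := pi_some s1 ne inP.
have [a2 [q2 [E2 D2]]] := pi_some s2 ne inP.
rewrite E1 E2; have [-> _] := te q2 q1 a1 a2 (etrans D1 (esym D2)); done.
Qed.

Lemma exists_selection (A : dfa M Sigma) :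
  exists pi : lang M Sigma -> option (Sigma * st A), is_selection pi.
Proof.
exists (fun l => match excluded_middle_informative (l = rlang A) with
                 | left _ => None
                 | right _ =>
                   match excluded_middle_informative (in_PA A l) with
                   | left H => proj1_sig (constructive_indefinite_description _ H)
                   | right _ => None
                   end
                 end); split.
- move=> x; case: excluded_middle_informative => [e|ne] /=; first by rewrite e.
  case: excluded_middle_informative => [H|nH] /=.
  + by case: constructive_indefinite_description.
  + by case: nH; exists x.
- by case: excluded_middle_informative.
Qed.

Lemma exists_minimal (A : dfa M Sigma) : is_mdfa A ->
  exists B : dfa M Sigma, is_mdfa B /\ minimal B /\ dfa_equiv B A.
Proof.
move=> finA; have [n0 cA] := fin_card finA.
suff: forall n (B : dfa M Sigma), is_mdfa B -> dfa_equiv B A -> has_card (st B) n ->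
  exists B' : dfa M Sigma, is_mdfa B' /\ minimal B' /\ dfa_equiv B' A.
  move=> H; apply: (H n0 A) => //.
move=> {cA n0} n0; elim/ltn_ind: n0 => n IH B finB eqB cB.
case: (classic (minimal B)) => [mB|nmB]; first by exists B.
have [B' [fB' [eB' fs]]] : exists B', is_mdfa B' /\ dfa_equiv B' B /\ fewer_states B' B.
  apply: NNPP => H; apply: nmB => B' f e fs; apply: H; by exists B'.
case: fs => [n1 [n2 [c1 [c2 lt]]]].
have e2 := card_uniq c2 cB; subst n2.
exact: (IH n1 lt B' fB' (dfa_equiv_trans eB' eqB) c1).
Qed.

End Gen.

Theorem mainTheorem11 (M : monoid) (Sigma : finType) (A : dfa M Sigma)
    (pi : lang M Sigma -> option (Sigma * st A)) :
  is_mdfa A -> is_selection pi ->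
  let N := Nauto (gA pi) (fA pi) (fA pi (rlang A)) (gA pi (rlang A)) in
  (* 1 *) (is_mdfa N /\ dfa_equiv N A) /\
  (* 2 *) transition_equalized N /\
  (* 3 *) (minimal A -> minimal N) /\
  (* 4 *) (exists B : dfa M Sigma,
             is_mdfa B /\ minimal B /\ transition_equalized B /\ dfa_equiv B A) /\
  (* 5 *) (minimal A -> fA pi \o fA pi = fA pi) /\
  (* 6 *) (minimal A -> transition_equalized A ->
             forall pi1 pi2 : lang M Sigma -> option (Sigma * st A),
               is_selection pi1 -> is_selection pi2 -> fA pi1 = fA pi2).
Proof.
move=> finA sel N.
split; first by split; [exact: NN_mdfa | exact: NN_equiv].
split; first exact: NN_te.
split; first exact: NN_min.
split.
  have [B [fB [mB eB]]] := exists_minimal finA.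
  have [piB selB] := exists_selection B.
  exists (NN piB); split; first exact: NN_mdfa.
  split; first exact: NN_min.
  split; first exact: NN_te.
  exact: dfa_equiv_trans (NN_equiv selB) eB.
split; first by move=> minA; exact: fA_idem.
move=> _ te; exact: fA_uniq.
Qed.
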